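(* Let $f=\frac1n\sum_{i=1}^nf_i$ with each $f_i:\mathbb{R}^d\to\mathbb{R}$ differentiable and $\nabla f_i$ $L_i$-Lipschitz. Fix a proper sampling with marginals $p_i$ and pair matrix $\mathbf P$, and $v\in\mathbb{R}^n$ with $\mathbf P-pp^\top\preceq\mathrm{Diag}(p_1v_1,\dots,p_nv_n)$, and let $Q=\sum_{i=1}^n\frac{v_iL_i^2}{p_in^2}$. For the iterates of ProxSARAH-AS (any stepsize $\eta>0$, any inner length $m$), for every $j\ge1$ and $1\le t\le m$, $$E\big[\|\mathcal V_t^{(j)}-\nabla f(x_t^{(j)})\|^2\big]\le Q\sum_{k=1}^tE\big[\|x_k^{(j)}-x_{k-1}^{(j)}\|^2\big].$$
   Context: A sampling is a random subset $S\subseteq[n]$ with $p_i=\mathrm{Prob}(i\in S)>0$ and $\mathbf P_{ij}=\mathrm{Prob}(\{i,j\}\subseteq S)$; $\preceq$ is the positive semidefinite order. $r:\mathbb{R}^d\to\mathbb{R}$ has proximal mapping $\mathrm{prox}_{\eta r}(y)=\arg\min_x\{\frac1{2\eta}\|x-y\|^2+r(x)\}$ (nonempty). ProxSARAH-AS: for $j=1,2,\dots$: $x_0^{(j)}=\tilde x^{(j)}$, $\mathcal V_0^{(j)}=\frac1n\sum_i\nabla f_i(x_0^{(j)})$, $x_1^{(j)}=x_0^{(j)}$; for $t=1,\dots,m$: draw $S_t^{(j)}$ from the sampling independently of the past, $\mathcal V_t^{(j)}=\sum_{i\in S_t^{(j)}}\frac1{np_i}(\nabla f_i(x_t^{(j)})-\nabla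 f_i(x_{t-1}^{(j)}))+\mathcal V_{t-1}^{(j)}$, $x_{t+1}^{(j)}\in\mathrm{prox}_{\eta r}(x_t^{(j)}-\eta\mathcal V_t^{(j)})$; then $\tilde x^{(j+1)}=x_{m+1}^{(j)}$. *)

(* Defs.v *)
From HB Require Import structures.
From mathcomp Require Import all_boot all_order all_algebra.
From mathcomp Require Import all_classical all_reals all_analysis.
Set Implicit Arguments. Unset Strict Implicit. Unset Printing Implicit Defensive.
Import Order.TTheory GRing.Theory Num.Theory.
Import numFieldNormedType.Exports.
Local Open Scope ring_scope.

Section Defs.
Variable R : realType.

Definition sqnorm d (x : 'rV[R]_d) : R := \sum_(k < d) (x 0 k) ^+ 2.
Definition enorm d (x : 'rV[R]_d) : R := Num.sqrt (sqnorm x).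

Definition grad d (f : 'rV[R]_d -> R) (x : 'rV[R]_d) : 'rV[R]_d :=
  \row_(k < d) ('d f x) (delta_mx 0 k).

Definition smooth_L d (f : 'rV[R]_d -> R) (L : R) : Prop :=
  (forall x, differentiable f x) /\
  forall x y, enorm (grad f x - grad f y) <= L * enorm (x - y).

Definition in_prox d (eta : R) (r : 'rV[R]_d -> R) (y x : 'rV[R]_d) : Prop :=
  forall z, (2 * eta)^-1 * sqnorm (x - y) + r x <= (2 * eta)^-1 * sqnorm (z - y) + r z.

Definition is_sampling n (pS : {set 'I_n} -> R) : Prop :=
  (forall A, 0 <= pS A) /\ \sum_(A : {set 'I_n}) pS A = 1.
Definition marg n (pS : {set 'I_n} -> R) (i : 'I_n) : R :=
  \sum_(A : {set 'I_n} | i \in A) pS A.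
Definition pairP n (pS : {set 'I_n} -> R) : 'M[R]_n :=
  \matrix_(i, j) \sum_(A : {set 'I_n} | (i \in A) && (j \in A)) pS A.
Definition margv n (pS : {set 'I_n} -> R) : 'cV[R]_n := \col_i marg pS i.

Definition psd n (A : 'M[R]_n) : Prop := forall h : 'cV[R]_n, 0 <= (h^T *m A *m h) 0 0.
Definition loewner_le n (A B : 'M[R]_n) : Prop := psd (B - A).

(* Expectation of a function of the first N i.i.d. draws omega 0, ..., omega (N-1)
   from the sampling pS (later draws, if accessed, are set to set0; all quantities
   below only depend on the first N draws). *)
Definition expect n (pS : {set 'I_n} -> R) (N : nat) (F : (nat -> {set 'I_n}) -> R) : R :=
  \sum_(s : {ffun 'I_N -> {set 'I_n}})
     (\prod_(k < N) pS (s k)) *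
     F (fun k => if insub k is Some k' then s k' else finset.set0).

(* ProxSARAH-AS, driven by the sample stream omega: the sample S_t^{(j)}
   (j >= 1, 1 <= t <= m) is omega ((j-1)*m + (t-1)).  The element of the
   prox set is chosen by sel, which may depend on the samples drawn so far. *)
Definition favg n d (fs : 'I_n -> 'rV[R]_d -> R) (x : 'rV[R]_d) : R :=
  n%:R^-1 * \sum_i fs i x.

Section Alg.
Variables (n d : nat) (fs : 'I_n -> 'rV[R]_d -> R) (pS : {set 'I_n} -> R)
  (r : 'rV[R]_d -> R) (eta : R) (m : nat)
  (sel : seq {set 'I_n} -> 'rV[R]_d -> 'rV[R]_d) (x1 : 'rV[R]_d)
  (omega : nat -> {set 'I_n}).

Definition avggrad (x : 'rV[R]_d) : 'rV[R]_d := n%:R^-1 *: \sum_i grad (fs i) x.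

(* inner loop of outer iteration j started at xt:
   inner j xt t = (x_t, x_{t+1}, V_t) *)
Fixpoint inner (j : nat) (xt : 'rV[R]_d) (t : nat) : 'rV[R]_d * 'rV[R]_d * 'rV[R]_d :=
  match t with
  | 0 => (xt, xt, avggrad xt)
  | t'.+1 =>
      let: (xprev, xcur, Vprev) := inner j xt t' in
      let S := omega ((j.-1) * m + t') in
      let V := \sum_(i in S) ((n%:R * marg pS i)^-1 *: (grad (fs i) xcur - grad (fs i) xprev))
               + Vprev in
      (xcur, sel (mkseq omega ((j.-1) * m + t'.+1)) (xcur - eta *: V), V)
  end.

(* starting point xtilde^{(k+1)} *)
Fixpoint xtilde_aux (k : nat) : 'rV[R]_d :=
  match k with
  | 0 => x1
  | k'.+1 => (inner k (xtilde_aux k') m).1.2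
  end.
Definition xtilde (j : nat) : 'rV[R]_d := xtilde_aux j.-1.

Definition xit (j t : nat) : 'rV[R]_d := (inner j (xtilde j) t).1.1.
Definition Vit (j t : nat) : 'rV[R]_d := (inner j (xtilde j) t).2.
End Alg.

End Defs.

(* Main.v *)
Require Import Defs.
From HB Require Import structures.
From mathcomp Require Import all_boot all_order all_algebra.
From mathcomp Require Import all_classical all_reals all_analysis.
From mathcomp Require Import ring lra zify.
Import Order.TTheory GRing.Theory Num.Theory.
Import numFieldNormedType.Exports.
Set Implicit Arguments. Unset Strict Implicit.
Local Open Scope ring_scope.

Lemma zm (V : zmodType) (s vt a0 a1 : V) : s + vt - a1 = vt - a0 + (s - (a1 - a0)).
Proof. by rewrite opprB [s + (a0 - a1)]addrC !addrA addrNK [vt - a1 + s]addrC addrA. Qed.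

Section H1.
Variable R : realType.

Lemma grad_favg n d (fs : 'I_n -> 'rV[R]_d -> R) x :
  (forall i, differentiable (fs i) x) ->
  grad (favg fs) x = n%:R^-1 *: \sum_i grad (fs i) x.
Proof.
move=> df.
have E : favg fs = n%:R^-1 *: (\sum_i fs i).
  by apply/funext => y; rewrite /favg fct_sumE.
have K : forall s : seq 'I_n, differentiable (\sum_(i <- s) fs i) x /\
   forall y, 'd (\sum_(i <- s) fs i) x y = \sum_(i <- s) 'd (fs i) x y.
  elim => [|a s [IH1 IH2]].
    rewrite big_nil; split; first exact: (@differentiable_cst _ _ _ (0:R) x).
    move=> y; rewrite big_nil; have -> : (0 : 'rV[R]_d -> R) = cst (0:R) by [].
    by rewrite diff_cst.
  rewrite big_cons; split; first exact: differentiableD.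
  by move=> y; rewrite diffD //= IH2 big_cons.
apply/rowP => k; rewrite !mxE E diffZ; last by case: (K (index_enum _)).
rewrite /= (proj2 (K _)) summxE; congr (_ * _); apply: eq_bigr => i _.
by rewrite mxE.
Qed.
End H1.

Section H2.
Variable R : realType.

Definition upd (T : Type) (om : nat -> T) (M : nat) (A : T) : nat -> T :=
  fun k => if k == M then A else om k.

Lemma expect_resample n (pS : {set 'I_n} -> R) N (F : (nat -> {set 'I_n}) -> R) M :
  (M < N)%N -> \sum_A pS A = 1 ->
  expect pS N F = expect pS N (fun om => \sum_A pS A * F (upd om M A)).
Proof.
move=> HM Hs.
pose Mo : 'I_N := Ordinal HM.
pose ext (s : {ffun 'I_N -> {set 'I_n}}) : nat -> {set 'I_n} :=
  fun k => if insub k is Some k' then s k' else finset.set0.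
pose sw (s : {ffun 'I_N -> {set 'I_n}}) A : {ffun 'I_N -> {set 'I_n}} :=
  [ffun k => if k == Mo then A else s k].
have Eext : forall s A, upd (ext s) M A = ext (sw s A).
  move=> s A; apply/funext => k; rewrite /upd /ext.
  case: insubP => [k' _ Hk|Hk].
    rewrite ffunE; rewrite -Hk.
    have -> : (val k' == M) = (k' == Mo) by [].
    by [].
  case: eqP => // kM; exfalso; move/negP: Hk; apply; rewrite kM.
  exact: HM.
rewrite /expect.
pose h (p : {ffun 'I_N -> {set 'I_n}} * {set 'I_n}) :=
  (\prod_(k < N) pS (p.1 k)) * pS p.2 * F (ext p.1).
pose phi (p : {ffun 'I_N -> {set 'I_n}} * {set 'I_n}) := (sw p.1 p.2, p.1 Mo).
have phiK : involutive phi.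
  case=> s A; rewrite /phi /= /sw ffunE eqxx; congr (_, _).
  by apply/ffunP => k; rewrite !ffunE; case: eqP => // ->.
transitivity (\sum_p h p).
  rewrite -(pair_bigA _ (fun s B => h (s, B))) /h /=.
  apply: eq_bigr => s _.
  by rewrite -[LHS]mulr1 -Hs mulr_sumr; apply: eq_bigr => B _; rewrite mulrAC.
rewrite (reindex_inj (inv_inj phiK)) -(pair_bigA _ (fun s B => h (phi (s, B)))).
apply: eq_bigr => s _; rewrite mulr_sumr; apply: eq_bigr => A _.
rewrite /h /phi /= -Eext mulrA; congr (_ * _).
rewrite (bigD1 Mo) //= [in RHS](bigD1 Mo) //= /sw ffunE eqxx.
rewrite (eq_bigr (fun i => pS (s i))); last first.
  by move=> k /negbTE kM; rewrite ffunE kM.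
by rewrite [LHS]mulrC [RHS]mulrAC mulrA.
Qed.
End H2.

Section H3.
Variable R : realType.

Lemma quadE n (B : 'M[R]_n) (h : 'cV[R]_n) :
  (h^T *m B *m h) 0 0 = \sum_i \sum_j h i 0 * B i j * h j 0.
Proof.
rewrite mxE exchange_big /=; apply: eq_bigr => j _.
rewrite mxE mulr_suml; apply: eq_bigr => i _; by rewrite mxE.
Qed.

Lemma core n (pS : {set 'I_n} -> R) (v : 'I_n -> R) (a : 'I_n -> R) (e : R) :
  \sum_A pS A = 1 -> (forall i, 0 < marg pS i) ->
  loewner_le (pairP pS - margv pS *m (margv pS)^T)
             (diag_mx (\row_i (marg pS i * v i))) ->
  \sum_A pS A * ((e + (\sum_(i in A) (n%:R * marg pS i)^-1 * a i
                       - n%:R^-1 * \sum_i a i)) ^+ 2 - e ^+ 2)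
  <= \sum_i v i * a i ^+ 2 / (marg pS i * n%:R ^+ 2).
Proof.
move=> Hs Hp Hpsd.
case: n pS v a Hs Hp Hpsd => [|n] pS v a Hs Hp Hpsd.
  rewrite !big_ord0 big1 // => A _.
  rewrite [\sum_(i in A) _]big1; last by case.
  by rewrite mulr0 subr0 addr0 subrr mulr0.
set p := marg pS.
pose h i := (n.+1%:R * p i)^-1 * a i.
set mu := n.+1%:R^-1 * \sum_i a i.
have Hmu : \sum_i p i * h i = mu.
  rewrite /mu mulr_sumr; apply: eq_bigr => i _; rewrite /h.
  have := Hp i; rewrite -/p => Hpi. field.
  rewrite lt0r_neq0 ?andbT //; apply: lt0r_neq0; have := ler0n R n; lra.
have HX1 : \sum_A pS A * \sum_(i in A) h i = mu.
  rewrite -Hmu.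
  transitivity (\sum_(A : {set 'I_n.+1}) \sum_i (if i \in A then pS A * h i else 0)).
    apply: eq_bigr => A _; rewrite mulr_sumr big_mkcond /=.
    by apply: eq_bigr => i _; case: ifP.
  rewrite exchange_big /=; apply: eq_bigr => i _.
  rewrite /p /marg mulr_suml [RHS]big_mkcond /=.
  by apply: eq_bigr => A _; case: ifP; rewrite ?mul0r.
have HX2 : \sum_A pS A * (\sum_(i in A) h i) ^+ 2 =
   \sum_i \sum_j h i * h j * pairP pS i j.
  transitivity (\sum_(A : {set 'I_n.+1}) \sum_i \sum_j
     (if (i \in A) && (j \in A) then h i * h j * pS A else 0)).
    apply: eq_bigr => A _; rewrite expr2 big_distrl /= mulr_sumr big_mkcond /=.
    apply: eq_bigr => i _; case: (i \in A) => /=; last by rewrite big1.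
    rewrite big_distrr mulr_sumr big_mkcond /=; apply: eq_bigr => j _.
    by case: (j \in A); rewrite ?mulr0 //; ring.
  rewrite exchange_big /=; apply: eq_bigr => i _.
  rewrite exchange_big /=; apply: eq_bigr => j _.
  rewrite mxE mulr_sumr [RHS]big_mkcond /=.
  by apply: eq_bigr => A _; case: ifP.
have Hq := Hpsd (\col_i h i).
rewrite quadE in Hq.
have Hq2 : \sum_i \sum_j (\col_i0 h i0) i 0 *
      (diag_mx (\row_i0 (marg pS i0 * v i0)) - (pairP pS - margv pS *m (margv pS)^T)) i j *
      (\col_i0 h i0) j 0
   = \sum_i p i * v i * h i ^+ 2 - \sum_i \sum_j h i * h j * pairP pS i j + mu ^+ 2.
  rewrite -Hmu expr2 mulr_suml -sumrB -big_split; apply: eq_bigr => i _ /=.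
  rewrite mulr_sumr.
  transitivity (\sum_j ((if j == i then p i * v i * h i ^+ 2 else 0)
     - h i * h j * pairP pS i j + p i * h i * (p j * h j))).
    apply: eq_bigr => j _; rewrite !mxE big_ord1 !mxE.
    case: (eqVneq i j) => [<-|ne]; rewrite ?eqxx ?mulr1n.
      rewrite /p; ring.
    rewrite mulr0n /p; ring.
  by rewrite big_split sumrB /= -big_mkcond big_pred1_eq.
rewrite Hq2 in Hq.
rewrite (eq_bigr (fun A => pS A * (\sum_(i in A) h i) ^+ 2
   + 2 * (e - mu) * (pS A * \sum_(i in A) h i) + (mu ^+ 2 - 2 * e * mu) * pS A));
  last by move=> A _; rewrite /h; ring.
rewrite !big_split /= -!mulr_sumr HX2 HX1 Hs.
rewrite [X in _ <= X](eq_bigr (fun i => p i * v i * h i ^+ 2)); last first.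
  move=> i _; rewrite /h; have := Hp i; rewrite -/p => Hpi; field.
  rewrite lt0r_neq0 ?andbT //; apply: lt0r_neq0; have := ler0n R n; lra.
lra.
Qed.

End H3.
Section V.
Variable R : realType.
Lemma core_vec n d (pS : {set 'I_n} -> R) (v : 'I_n -> R) (D : 'I_n -> 'rV[R]_d) (E : 'rV[R]_d) :
  \sum_A pS A = 1 -> (forall i, 0 < marg pS i) ->
  loewner_le (pairP pS - margv pS *m (margv pS)^T)
             (diag_mx (\row_i (marg pS i * v i))) ->
  \sum_A pS A * (sqnorm (E + (\sum_(i in A) (n%:R * marg pS i)^-1 *: D i
                       - n%:R^-1 *: \sum_i D i)) - sqnorm E)
  <= \sum_i v i * sqnorm (D i) / (marg pS i * n%:R ^+ 2).
Proof.
move=> Hs Hp Hpsd.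
rewrite /sqnorm.
under eq_bigr => A _ do rewrite -sumrB mulr_sumr.
rewrite exchange_big /=.
under [X in _ <= X]eq_bigr => i _ do rewrite mulr_sumr mulr_suml.
rewrite [X in _ <= X]exchange_big /=.
apply: ler_sum => k _.
have := @core R n pS v (fun i => D i 0 k) (E 0 k) Hs Hp Hpsd.
congr (_ <= _).
  apply: eq_bigr => A _; congr (_ * (_ ^+ 2 - _)).
  rewrite !mxE !summxE; congr (_ + (_ - _)).
    by apply: eq_bigr => i _; rewrite mxE.
Qed.
End V.

Section H4.
Variable R : realType.
Variables (n d : nat) (fs : 'I_n -> 'rV[R]_d -> R) (pS : {set 'I_n} -> R)
  (eta : R) (m : nat) (sel : seq {set 'I_n} -> 'rV[R]_d -> 'rV[R]_d) (x1 : 'rV[R]_d).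

Lemma inner_dep om om' j xt t :
  (forall i, (i < j.-1 * m + t)%N -> om i = om' i) ->
  inner fs pS eta m sel om j xt t = inner fs pS eta m sel om' j xt t.
Proof.
elim: t => [//|t IH] H /=.
rewrite IH; last by move=> i Hi; apply: H; lia.
case: (inner fs pS eta m sel om' j xt t) => [[a b] c].
rewrite (H (j.-1 * m + t)%N); last by lia.
have -> : mkseq om (j.-1 * m + t.+1) = mkseq om' (j.-1 * m + t.+1).
  apply/eq_in_map => i; rewrite mem_iota => /andP [_ Hi]; apply: H; lia.
by [].
Qed.

Lemma xtilde_dep om om' k :
  (forall i, (i < k * m)%N -> om i = om' i) ->
  xtilde_aux fs pS eta m sel x1 om k = xtilde_aux fs pS eta m sel x1 om' k.
Proof.
elim: k => [//|k IH] H /=.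
rewrite IH; last by move=> i Hi; apply: H; lia.
by rewrite (@inner_dep om om') // => i Hi; apply: H; rewrite /= in Hi; lia.
Qed.
End H4.


Section E.
Variables (R : realType) (n : nat) (pS : {set 'I_n} -> R).

Lemma expectD N F G : expect pS N (fun om => F om + G om) = expect pS N F + expect pS N G.
Proof. by rewrite /expect -big_split; apply: eq_bigr => s _; rewrite mulrDr. Qed.

Lemma expectZ N c F : expect pS N (fun om => c * F om) = c * expect pS N F.
Proof. by rewrite /expect mulr_sumr; apply: eq_bigr => s _; rewrite mulrCA. Qed.

Lemma expect0 N : expect pS N (fun _ => 0) = 0.
Proof. by rewrite /expect big1 // => s _; rewrite mulr0. Qed.

Lemma expect_ext N F G : (forall om, F om = G om) -> expect pS N F = expect pS N G.
Proof. by move=> H; rewrite /expect; apply: eq_bigr => s _; rewrite H. Qed.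

Lemma expect_le N F G : (forall A, 0 <= pS A) -> (forall om, F om <= G om) ->
  expect pS N F <= expect pS N G.
Proof.
move=> H0 H; rewrite /expect; apply: ler_sum => s _; apply: ler_wpM2l => //.
by apply: prodr_ge0 => k _.
Qed.

Lemma v_nonneg (v : 'I_n -> R) :
  (forall A, 0 <= pS A) -> \sum_A pS A = 1 -> (forall i, 0 < marg pS i) ->
  loewner_le (pairP pS - margv pS *m (margv pS)^T)
             (diag_mx (\row_i (marg pS i * v i))) ->
  forall i, 0 <= v i.
Proof.
move=> H0 Hs Hp Hpsd i.
have := Hpsd (\col_k (k == i)%:R); rewrite /psd quadE (bigD1 i) //=.
rewrite [X in _ + X]big1 => [|k /negbTE ki]; last first.
  by apply: big1 => l _; rewrite !mxE ki !mul0r.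
rewrite addr0 (bigD1 i) //= [X in _ + X]big1 => [|k /negbTE ki]; last first.
  by rewrite !mxE ki !mulr0.
rewrite !mxE eqxx big_ord1 !mxE mulr1n !mul1r mulr1 !addr0.
have -> : \sum_(A : {set 'I_n} | (i \in A) && (i \in A)) pS A = marg pS i.
  by apply: eq_bigl => A; rewrite andbb.
have Hle : marg pS i <= 1.
  rewrite -Hs /marg [X in _ <= X](bigID (fun A : {set 'I_n} => i \in A)) /= lerDl.
  by apply: sumr_ge0 => A _.
have := Hp i => Hpi.
move=> Hq; rewrite /= mulr1n in Hq; nra.
Qed.
End E.

Section Main.
Variables (R : realType) (n d : nat) (fs : 'I_n -> 'rV[R]_d -> R) (L : 'I_n -> R)
  (pS : {set 'I_n} -> R) (v : 'I_n -> R) (eta : R) (m : nat)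
  (sel : seq {set 'I_n} -> 'rV[R]_d -> 'rV[R]_d) (x1 : 'rV[R]_d).
Hypotheses (Hsm : forall i, smooth_L (fs i) (L i)) (HpS : forall A, 0 <= pS A)
  (Hs : \sum_A pS A = 1) (Hp : forall i, 0 < marg pS i)
  (Hpsd : loewner_le (pairP pS - margv pS *m (margv pS)^T)
             (diag_mx (\row_i (marg pS i * v i)))).
Variable j : nat.

Local Notation X om k := (xit fs pS eta m sel x1 om j k).
Local Notation V om k := (Vit fs pS eta m sel x1 om j k).
Local Notation e om k := (V om k - grad (favg fs) (X om k)).
Local Notation Q := (\sum_i (v i * L i ^+ 2 / (marg pS i * n%:R ^+ 2))).

Lemma grad_avg x : grad (favg fs) x = n%:R^-1 *: \sum_i grad (fs i) x.
Proof. by apply: grad_favg => i; exact: (Hsm i).1. Qed.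

Lemma Xsucc om t :
  X om t.+1 = (inner fs pS eta m sel om j (xtilde fs pS eta m sel x1 om j) t).1.2.
Proof. by rewrite /xit /=; case: inner => [[a b] c]. Qed.

Lemma esucc om t :
  e om t.+1 = e om t +
   (\sum_(i in om (j.-1 * m + t)%N) (n%:R * marg pS i)^-1 *:
        (grad (fs i) (X om t.+1) - grad (fs i) (X om t))
    - n%:R^-1 *: \sum_i (grad (fs i) (X om t.+1) - grad (fs i) (X om t))).
Proof.
have -> : V om t.+1 = \sum_(i in om (j.-1 * m + t)%N) (n%:R * marg pS i)^-1 *:
        (grad (fs i) (X om t.+1) - grad (fs i) (X om t)) + V om t.
  by rewrite /Vit /xit /=; case: inner => [[a b] c].
by rewrite !grad_avg sumrB scalerBr; exact: zm.
Qed.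

Lemma dep om M A t : (j.-1 * m + t <= M)%N ->
  inner fs pS eta m sel (upd om M A) j (xtilde fs pS eta m sel x1 (upd om M A) j) t
  = inner fs pS eta m sel om j (xtilde fs pS eta m sel x1 om j) t.
Proof.
move=> HM.
have -> : xtilde fs pS eta m sel x1 (upd om M A) j = xtilde fs pS eta m sel x1 om j.
  rewrite /xtilde; apply: xtilde_dep => i Hi; rewrite /upd; case: eqP => // iM; lia.
by apply: inner_dep => i Hi; rewrite /upd; case: eqP => // iM; lia.
Qed.

Lemma sqnorm_ge0 (x : 'rV[R]_d) : 0 <= sqnorm x.
Proof. by apply: sumr_ge0 => k _; exact: sqr_ge0. Qed.

Lemma sqnorm_lip i x y : sqnorm (grad (fs i) x - grad (fs i) y) <= L i ^+ 2 * sqnorm (x - y).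
Proof.
have := (Hsm i).2 x y; rewrite /enorm => H.
have h1 := sqnorm_ge0 (grad (fs i) x - grad (fs i) y).
have h2 := sqnorm_ge0 (x - y).
have Ha := sqrtr_ge0 (sqnorm (grad (fs i) x - grad (fs i) y)).
rewrite -(sqr_sqrtr h1) -(sqr_sqrtr h2) -exprMn.
apply: lerXn2r => //; rewrite nnegrE //; exact: le_trans Ha H.
Qed.

Lemma claim t N : (j.-1 * m + t <= N)%N ->
  expect pS N (fun om => sqnorm (e om t)) <=
  Q * \sum_(1 <= k < t.+1) expect pS N (fun om => sqnorm (X om k - X om k.-1)).
Proof.
elim: t N => [|t IH] N HN.
  rewrite (@expect_ext _ _ _ _ _ (fun _ => 0)); last first.
    move=> om; have -> : e om 0 = 0 by rewrite /Vit /xit /= /avggrad grad_avg subrr.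
    by rewrite /sqnorm big1 // => k _; rewrite mxE expr0n.
  by rewrite expect0 big_geq // mulr0.
set M := (j.-1 * m + t)%N.
have HM : (M < N)%N by rewrite /M; lia.
have HMt : (j.-1 * m + t <= N)%N by lia.
rewrite big_nat_recr //= mulrDr.
pose G om := sqnorm (e om t.+1) - sqnorm (e om t).
rewrite (@expect_ext _ _ _ _ (fun om => sqnorm (e om t.+1))
            (fun om => sqnorm (e om t) + G om)); last by move=> om; rewrite /G subrKC.
rewrite expectD lerD //; first exact: IH.
rewrite -expectZ (expect_resample _ HM Hs).
apply: expect_le => // om.
have HG : forall A, G (upd om M A) = sqnorm (e om t +
   (\sum_(i in A) (n%:R * marg pS i)^-1 *:
        (grad (fs i) (X om t.+1) - grad (fs i) (X om t))
    - n%:R^-1 *: \sum_i (grad (fs i) (X om t.+1) - grad (fs i) (X om t))))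
   - sqnorm (e om t).
  move=> A; rewrite /G esucc.
  have E1 : X (upd om M A) t = X om t by rewrite /xit (dep om A (leqnn _)).
  have E2 : X (upd om M A) t.+1 = X om t.+1 by rewrite !Xsucc (dep om A (leqnn _)).
  have E3 : V (upd om M A) t = V om t by rewrite /Vit (dep om A (leqnn _)).
  have E4 : upd om M A (j.-1 * m + t)%N = A by rewrite /upd eqxx.
  by rewrite E1 E2 E3 E4.
rewrite (eq_bigr _ (fun A _ => congr1 (fun x => pS A * x) (HG A))).
apply: le_trans (core_vec _ _ Hs Hp Hpsd) _.
rewrite mulr_suml; apply: ler_sum => i _.
have Hv := v_nonneg HpS Hs Hp Hpsd i.
have Hc : 0 <= v i / (marg pS i * n%:R ^+ 2).
  by apply: divr_ge0 => //; apply: mulr_ge0; [exact: ltW | exact: sqr_ge0].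
have := ler_wpM2l Hc (sqnorm_lip i (X om t.+1) (X om t)).
set D := sqnorm (grad (fs i) (X om t.+1) - grad (fs i) (X om t)).
set s := sqnorm (X om t.+1 - X om t).
have -> : v i * D / (marg pS i * n%:R ^+ 2) = v i / (marg pS i * n%:R ^+ 2) * D by ring.
have -> : v i * L i ^+ 2 / (marg pS i * n%:R ^+ 2) * s
   = v i / (marg pS i * n%:R ^+ 2) * (L i ^+ 2 * s) by ring.
done.
Qed.
End Main.

Theorem lemma5p1 (R : realType) (n d : nat)
  (fs : 'I_n -> 'rV[R]_d -> R) (L : 'I_n -> R)
  (pS : {set 'I_n} -> R) (v : 'I_n -> R)
  (r : 'rV[R]_d -> R) (eta : R) (m : nat)
  (sel : seq {set 'I_n} -> 'rV[R]_d -> 'rV[R]_d) (x1 : 'rV[R]_d) :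
  (forall i, smooth_L (fs i) (L i)) ->
  is_sampling pS ->
  (forall i, 0 < marg pS i) ->
  loewner_le (pairP pS - margv pS *m (margv pS)^T)
             (diag_mx (\row_i (marg pS i * v i))) ->
  0 < eta ->
  (forall h y, in_prox eta r y (sel h y)) ->
  forall j t, (1 <= j)%N -> (1 <= t <= m)%N ->
  let N := ((j.-1) * m + t)%N in
  let Q := \sum_i (v i * L i ^+ 2 / (marg pS i * n%:R ^+ 2)) in
  expect pS N (fun om =>
     sqnorm (Vit fs pS eta m sel x1 om j t - grad (favg fs) (xit fs pS eta m sel x1 om j t)))
  <= Q * \sum_(1 <= k < t.+1)
        expect pS N (fun om =>
          sqnorm (xit fs pS eta m sel x1 om j k - xit fs pS eta m sel x1 om j k.-1)).
Proof.
move=> Hsm [HpS Hs] Hp Hpsd _ _ j t Hj /andP [Ht1 Htm] /=.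
exact: (@claim _ _ _ _ _ _ _ eta m sel x1 Hsm HpS Hs Hp Hpsd j t _ (leqnn _)).
Qed.
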